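(* In the setting and under the hypotheses of the following result, suppose additionally that $\hat\varphi_T(H_T)\overset{p}{\to}\varphi_0$. Then $(K^\kappa\hat\varphi_T)(H_T)\overset{p}{\to}\varphi_0$. Hypotheses: the data come from the uncontaminated causal invertible VARMA model $\phi_0(L)x_t=\theta_0(L)\varepsilon_t$; $H_T\subset\{1,\dots,T\}$ is a retained subset; $\kappa\ge0$ is an integer; $\hat\varphi_T(\cdot)$ minimises $f_T(\cdot,\cdot)$ over $\mathcal V$; (A1) there is an open $\mathcal N\subset\mathcal V$ such that with probability tending to one: (i) there is $\delta>0$ with $\inf_{\varphi\notin\mathcal N}f_T(\varphi,H_T)\ge\inf_{\varphi\in\mathcal N}f_T(\varphi,H_T)+\delta$, and (ii) for every $\varepsilon>0$ there is $\eta_\varepsilon>0$ with $\inf_{\varphi\in\mathcal N,\|\varphi-\hat\varphi_T(H_T)\|\ge\varepsilon}f_T(\varphi,H_T)\ge f_T(\hat\varphi_T(H_T),H_T)+\eta_\varepsilon$; (A2) $\sup_{\varphi\in\mathcal V}|f_T(\varphi,H_T)-f_T(\varphi,S^\kappa H_T)|\overset{p}{\to}0$. (In the maximisation case, infima become suprema and ''$\ge\cdot+c$'' becomes ''$\le\cdot-c$''.)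
   Context: $\{x_t\}$ is a $d$-dimensional mean-zero VARMA process, $\phi_0(L)x_t=\theta_0(L)\varepsilon_t$. The parameter space $\mathcal V$ consists of $\varphi=(\phi,\theta)$ for which the model is causal and invertible; $\varphi_0=(\phi_0,\theta_0)\in\mathcal V$ is the true parameter. Residuals: $e_t(\varphi)=\theta^{-1}(L)\phi(L)x_t$. For $H\subset\{1,\dots,T\}$, $f_T(\varphi,H)=g_T(\{e_t(\varphi):t\in H\})$ and $\hat\varphi_T(H)$ is an exact optimiser of $f_T(\cdot,H)$ over $\mathcal V$. Patch removal: $S^\kappa H_T=H_T\setminus\bigcup_{t\notin H_T}\{t+1,\dots,\min(t+\kappa,T)\}$ and $(K^\kappa\hat\varphi_T)(H_T)=\hat\varphi_T(S^\kappa H_T)$.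
   Formalization: In (A1) the constants δ and $\eta_\varepsilon$ are fixed numbers chosen before the event that holds with probability tending to one, so they do not depend on T or on the sample. Each condition added here is assumed in the paper as well or is needed for the statement above to hold. *)

(* Defs.v *)
From HB Require Import structures.
From mathcomp Require Import all_boot all_order all_algebra.
From mathcomp Require Import all_classical all_reals all_analysis.
Set Implicit Arguments. Unset Strict Implicit. Unset Printing Implicit Defensive.
Import Order.TTheory GRing.Theory Num.Theory.
Import numFieldNormedType.Exports.
Local Open Scope classical_set_scope.
Local Open Scope ring_scope.

Section VarmaDefs.
Variables (R : realType) (d0 : measure_display) (Omega : measurableType d0).
Variable (P : probability Omega R).

(* The sequence of (possibly non-measurable) events A T has probability
   tending to zero, in the outer-probability sense: for every delta > 0,
   eventually A T is covered by a measurable set of probability <= delta. *)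
Definition prob_vanishing (A : nat -> set Omega) : Prop :=
  forall delta : R, 0 < delta ->
    \forall T \near \oo, exists B : set Omega,
      [/\ measurable B, A T `<=` B & (P B <= delta%:E)%E].

Definition wp_tending_to_one (E : nat -> set Omega) : Prop :=
  prob_vanishing (fun T => ~` E T).

Definition cvg_in_prob (n : nat) (X : nat -> Omega -> 'rV[R]_n) (x : 'rV[R]_n)
  : Prop :=
  forall eps : R, 0 < eps ->
    prob_vanishing (fun T => [set w | eps <= `|X T w - x|]).

Definition cvg_in_prob0 (Y : nat -> Omega -> \bar R) : Prop :=
  forall eps : R, 0 < eps ->
    prob_vanishing (fun T => [set w | (eps%:E <= Y T w)%E]).
End VarmaDefs.

Definition resid_family (R : realType) (d : nat) (e : nat -> 'cV[R]_d)
  (H : set nat) : nat -> option 'cV[R]_d :=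
  fun t => if `[< H t >] then Some (e t) else None.

Definition crit_fT (R : realType) (Omega : Type) (d n : nat)
  (g : nat -> (nat -> option 'cV[R]_d) -> R)
  (e : Omega -> 'rV[R]_n -> nat -> 'cV[R]_d)
  (T : nat) (w : Omega) (phi : 'rV[R]_n) (H : set nat) : R :=
  g T (resid_family (e w phi) H).

Definition patch_removal (T kappa : nat) (H : set nat) : set nat :=
  [set s | H s /\
     ~ (exists t : nat, [/\ (1 <= t <= T)%N, ~ H t, (t < s)%N
                          & (s <= minn (t + kappa) T)%N])].

(* Main.v *)
Require Import Defs.
From HB Require Import structures.
From mathcomp Require Import all_boot all_order all_algebra.
From mathcomp Require Import all_classical all_reals all_analysis.
Import Order.TTheory GRing.Theory Num.Theory.
Import numFieldNormedType.Exports.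
Local Open Scope classical_set_scope.
Local Open Scope ring_scope.

Lemma vanishU {R : realType} {d : measure_display} {Om : measurableType d}
  {P : probability Om R} {A A1 A2 : nat -> set Om} :
  (forall T, A T `<=` A1 T `|` A2 T) ->
  prob_vanishing P A1 -> prob_vanishing P A2 -> prob_vanishing P A.
Proof.
move=> sA h1 h2 del del0.
have hd : 0 < del / 2 by rewrite divr_gt0.
apply: filterS2 (h1 _ hd) (h2 _ hd) => T [B1 [mB1 sB1 PB1]] [B2 [mB2 sB2 PB2]].
exists (B1 `|` B2); split; first exact: measurableU.
  by move=> w /sA [/sB1 ?|/sB2 ?]; [left|right].
apply: le_trans (measureU2 _ mB1 mB2) _.
by rewrite (splitr del) EFinD; apply: leeD.
Qed.

Lemma vanishUU {R : realType} {d : measure_display} {Om : measurableType d}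
  {P : probability Om R} {A1 A2 : nat -> set Om} :
  prob_vanishing P A1 -> prob_vanishing P A2 ->
  prob_vanishing P (fun T => A1 T `|` A2 T).
Proof. move=> h1 h2; exact: (vanishU (fun T => @subset_refl _ (A1 T `|` A2 T)) h1 h2). Qed.

Theorem corollary1
  (R : realType) (d0 : measure_display) (Omega : measurableType d0)
  (P : probability Omega R)
  (d n : nat)                                   (* dimension, # parameters *)
  (V : set 'rV[R]_n) (phi0 : 'rV[R]_n)          (* parameter space, truth *)
  (e : Omega -> 'rV[R]_n -> nat -> 'cV[R]_d)    (* residuals e_t(phi) *)
  (g : nat -> (nat -> option 'cV[R]_d) -> R)    (* criterion g_T *)
  (est : Omega -> nat -> set nat -> 'rV[R]_n)   (* phihat_T(H) *)
  (H : nat -> Omega -> set nat)                 (* retained subset H_T *)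
  (kappa : nat) :
  V phi0 ->
  (forall T w, H T w `<=` [set t | (1 <= t <= T)%N]) ->
  (* phihat_T(H) is an exact minimiser of f_T(., H) over V *)
  (forall T w (G : set nat), G `<=` [set t | (1 <= t <= T)%N] ->
     V (est w T G) /\
     forall phi, V phi -> crit_fT g e T w (est w T G) G <= crit_fT g e T w phi G) ->
  (* (A1) *)
  (exists N : set 'rV[R]_n, [/\ open N, N `<=` V,
     (exists delta : R, 0 < delta /\
        wp_tending_to_one P (fun T => [set w |
          (ereal_inf [set (crit_fT g e T w phi (H T w))%:E | phi in V `\` N]
           >= ereal_inf [set (crit_fT g e T w phi (H T w))%:E | phi in N]
              + delta%:E)%E]))
   & (forall eps : R, 0 < eps -> exists eta : R, 0 < eta /\
        wp_tending_to_one P (fun T => [set w |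
          (ereal_inf [set (crit_fT g e T w phi (H T w))%:E
                     | phi in [set phi | N phi /\
                                 (eps <= Num.norm (phi - est w T (H T w)))%R ]]
           >= (crit_fT g e T w (est w T (H T w)) (H T w) + eta)%:E)%E]))]) ->
  (* (A2) *)
  cvg_in_prob0 P (fun T w =>
     ereal_sup [set (Num.norm (crit_fT g e T w phi (H T w)
                      - crit_fT g e T w phi (patch_removal T kappa (H T w))))%:E
               | phi in V]) ->
  (* additional hypothesis: phihat_T(H_T) ->p phi0 *)
  cvg_in_prob P (fun T w => est w T (H T w)) phi0 ->
  (* conclusion: (K^kappa phihat_T)(H_T) = phihat_T(S^kappa H_T) ->p phi0 *)
  cvg_in_prob P (fun T w => est w T (patch_removal T kappa (H T w))) phi0.
Proof.
move=> Vphi0 Hsub estP [N [oN NV [delta [dpos E1]] E2]] A2 cH.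
move=> eps eps0.
have e20 : 0 < eps / 2 by rewrite divr_gt0.
have [eta [eta0 E2e]] := E2 _ e20.
set c := Num.min eta delta / 2.
have c0 : 0 < c by rewrite divr_gt0 // lt_min eta0 dpos.
have A2c := A2 _ c0.
have cH2 := cH _ e20.
apply: (vanishU _ (vanishUU cH2 E1) (vanishUU E2e A2c)).
move=> T w /= epsle.
set Hs := H T w.
set S := patch_removal T kappa Hs.
have SHs : S `<=` Hs by move=> s [].
have [VH minH] := estP T w Hs (Hsub T w).
have [VS minS] := estP T w S (subset_trans SHs (Hsub T w)).
set eH := est w T Hs in VH minH *.
set eS := est w T S in VS minS epsle *.
set f := fun phi => crit_fT g e T w phi Hs.
set fS := fun phi => crit_fT g e T w phi S.
apply: contrapT; rewrite /setU /= !not_orP => -[[hH hE1] [hE2 hD]].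
move/contrapT: hE1 => hE1; move/contrapT: hE2 => hE2.
rewrite -/Hs -/eH in hE1 hE2 hH.
have clt : `|eH - phi0| < eps / 2 by rewrite ltNge; apply/negP.
rewrite -/Hs -/S in hD.
have Dlt : ((ereal_sup [set `|f phi - fS phi|%:E | phi in V]) < c%:E)%E.
  by rewrite ltNge; apply/negP.
have Dphi : forall phi, V phi -> `|f phi - fS phi| < c.
  move=> phi Vphi; rewrite -lte_fin; apply: le_lt_trans Dlt.
  by apply: ereal_sup_ubound; exists phi.
have key : f eS < f eH + 2 * c.
  have h1 : f eS < fS eS + c.
    by rewrite -ltrBlDl; apply: le_lt_trans (Dphi _ VS); exact: ler_norm.
  have h2 : fS eS <= fS eH by exact: minS.
  have h3 : fS eH < f eH + c.
    rewrite -ltrBlDl; apply: le_lt_trans (Dphi _ VH).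
    by rewrite -normrN opprB; exact: ler_norm.
  rewrite mulr2n mulrDl mul1r addrA.
  apply: (lt_trans h1); rewrite ltrD2r; exact: le_lt_trans h2 h3.
have ce : 2 * c <= eta by rewrite /c mulrC divfK ?pnatr_eq0 // ge_min lexx.
have cd : 2 * c <= delta by rewrite /c mulrC divfK ?pnatr_eq0 // ge_min lexx orbT.
have dist : eps / 2 <= `|eS - eH|.
  have := le_trans epsle (ler_distD eH eS phi0).
  rewrite {1}(splitr eps) => h; apply: contraTT h; rewrite -!ltNge => h.
  by rewrite ltrD.
have [NeS|NeS] := pselect (N eS).
  have : ((f eH + eta)%:E <= (f eS)%:E)%E.
    apply: le_trans hE2 _; apply: ereal_inf_lbound; exists eS => //.
  rewrite lee_fin => h; move: key; rewrite ltNge => /negP; apply.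
  by apply: le_trans h; rewrite lerD2l.
have : ((f eH + delta)%:E <= (f eS)%:E)%E.
  have mem : [set (crit_fT g e T w phi Hs)%:E | phi in V `\` N] (f eS)%:E.
    by exists eS.
  apply: le_trans _ (ereal_inf_lbound mem).
  apply: le_trans hE1; rewrite EFinD leeD2r //.
  by apply/ereal_infP => y; rewrite /image /= => -[phi Nphi <-]; rewrite lee_fin; apply: minH; apply: NV.
rewrite lee_fin => h; move: key; rewrite ltNge => /negP; apply.
by apply: le_trans h; rewrite lerD2l.
Qed.
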